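(* Let $k$ be a positive integer, $a=3k+2$, $S=\{a,a+1,a+2\}$, $G=\langle S\rangle$, $t=\lfloor 3k/2\rfloor$, $I_{i,k}=[ia,\,ia+2i]$ for $i\in[0,t+1]$, and $H_{7,k}=\bigcup_{i=0}^{t}I_{i,k}\cup[(t+1)a,\infty[$. Then: (1) $G=H_{7,k}$; (2) $I_{i,k}<I_{i+1,k}$ for every $i\in[0,t]$, and $I_{t,k}<[(t+1)a,\infty[$; (3) $H_{7,k}$ is a $3$-permutation numerical semigroup.
   Context: $\mathbb{N}=\{0,1,2,\dots\}$. A numerical semigroup is a submonoid $G$ of $(\mathbb{N},+,0)$ with $\mathbb{N}\setminus G$ finite; $\langle S\rangle$ is the submonoid generated by $S$. Writing the elements of a numerical semigroup as $0=g_0<g_1<g_2<\cdots$, it is an $n$-permutation numerical semigroup if it is generated by $\{g_1,\dots,g_n\}$ and for every $k\in\mathbb{N}$ the tuple $(g_{kn+1}\bmod n,\dots,g_{kn+n}\bmod n)$ contains exactly one representative of each residue class mod $n$. Notation: $[u,v]=\{x\in\mathbb{N}:u\le x\le v\}$, $[u,\infty[=\{x\in\mathbb{N}:x\ge u\}$; for nonempty $X,Y\subseteq\mathbb{N}$, $X<Y$ means $x<y$ for all $x\in X,y\in Y$. *)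

(* Defs.v *)
From mathcomp Require Import all_boot.
Set Implicit Arguments. Unset Strict Implicit. Unset Printing Implicit Defensive.

Inductive gen (S : nat -> Prop) : nat -> Prop :=
| gen0 : gen S 0
| genS x s : gen S x -> S s -> gen S (x + s).

Definition numerical_semigroup (G : pred nat) : Prop :=
  G 0 /\ (forall x y, G x -> G y -> G (x + y)) /\
  exists s : seq nat, forall x, ~~ G x -> x \in s.

(* x is the element g_j of G (elements listed increasingly g_0 < g_1 < ...) *)
Definition nth_elem (G : pred nat) (j x : nat) : bool :=
  G x && (count G (iota 0 x) == j).

Definition perm_numerical_semigroup (n : nat) (G : pred nat) : Prop :=
  numerical_semigroup G /\
  (forall x, G x <-> gen (fun y => exists2 i, 1 <= i <= n & nth_elem G i y) x) /\
  (forall k r, r < n ->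
     exists! i, (1 <= i <= n) /\
       exists2 x, nth_elem G (k * n + i) x & x %% n = r).

Definition itv (u v : nat) : pred nat := fun x => u <= x <= v.
Definition itvinf (u : nat) : pred nat := fun x => u <= x.

Definition setlt (X Y : pred nat) : Prop := forall x y, X x -> Y y -> x < y.

Definition a_k (k : nat) : nat := 3 * k + 2.
Definition t_k (k : nat) : nat := (3 * k) %/ 2.
Definition S_k (k : nat) : nat -> Prop :=
  fun s => s = a_k k \/ s = a_k k + 1 \/ s = a_k k + 2.
Definition I_ik (i k : nat) : pred nat := itv (i * a_k k) (i * a_k k + 2 * i).
Definition H7 (k : nat) : pred nat :=
  fun x => has (fun i => I_ik i k x) (iota 0 (t_k k + 1))
           || itvinf ((t_k k + 1) * a_k k) x.

(* Main.v *)
Require Import Defs.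
From mathcomp Require Import all_boot.
From mathcomp Require Import zify.
Set Implicit Arguments. Unset Strict Implicit.

Definition cnt (P : pred nat) x := count P (iota 0 x).

Lemma cntS (P : pred nat) x : cnt P x.+1 = cnt P x + P x.
Proof. by rewrite /cnt -addn1 iotaD count_cat /= addn0. Qed.

Lemma cnt_mono (P : pred nat) x y : x <= y -> cnt P x <= cnt P y.
Proof.
move=> /subnK <-; elim: (y - x) => [|d IH] //=; rewrite addSn cntS; lia.
Qed.

Lemma cnt_strict (P : pred nat) x y : P x -> x < y -> cnt P x < cnt P y.
Proof.
move=> Px lt; have := @cnt_mono P x.+1 y lt; rewrite cntS Px; lia.
Qed.

Lemma cnt_inj (P : pred nat) x y : P x -> P y -> cnt P x = cnt P y -> x = y.
Proof.
move=> Px Py e; case: (ltngtP x y) => // h.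
  by have := cnt_strict Px h; rewrite e ltnn.
by have := cnt_strict Py h; rewrite e ltnn.
Qed.

Lemma cnt_tail (P : pred nat) N n : (forall x, N <= x -> P x) -> cnt P (N + n) = cnt P N + n.
Proof.
move=> HP; elim: n => [|n IH]; first by rewrite !addn0.
by rewrite addnS cntS IH HP ?leq_addr // addnS addn1.
Qed.

Lemma cnt_exists (P : pred nat) N j : (forall x, N <= x -> P x) ->
  exists x, P x /\ cnt P x = j.
Proof.
move=> HP.
have ex : exists y, j < cnt P y by exists (N + j.+1); rewrite cnt_tail //; lia.
case: (ex_minnP ex) => y hy hmin.
case: y hy hmin => [|x] hy hmin; first by rewrite /cnt in hy.
have hx : cnt P x <= j by rewrite leqNgt; apply/negP => /hmin; lia.
move: hy; rewrite cntS; case Px: (P x) => /= h; last lia.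
exists x; split => //; lia.
Qed.

Lemma dm q a r : r < a -> (q * a + r) %/ a = q /\ (q * a + r) %% a = r.
Proof.
move=> ra; have a0 : 0 < a by lia.
by rewrite divnMDl // modnMDl divn_small // modn_small // addn0.
Qed.

Lemma tfacts k : 2 * t_k k <= 3 * k /\ 3 * k <= 2 * t_k k + 1.
Proof. rewrite /t_k; lia. Qed.

Definition Hb k : pred nat := fun x => x %% a_k k <= 2 * (x %/ a_k k).

Lemma H7_Hb k x : H7 k x = Hb k x.
Proof.
have [t1 t2] := tfacts k.
have a0 : 0 < a_k k by rewrite /a_k; lia.
rewrite /H7 /Hb /itvinf /I_ik /itv.
have e := divn_eq x (a_k k); have lt := ltn_pmod x a0.
set q := x %/ a_k k in e *; set r := x %% a_k k in e lt *.
have ea : a_k k = 3 * k + 2 by [].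
move: (a_k k) ea a0 e lt => a ea a0 e lt.
apply/idP/idP.
- case/orP.
  + case/hasP => i; rewrite mem_iota add0n => /andP [_ hi] /andP [h1 h2].
    have hq : q = i.
      apply/eqP; rewrite eqn_leq; apply/andP; split.
        rewrite -ltnS -(ltn_pmul2r a0) mulSn; lia.
      rewrite -ltnS -(ltn_pmul2r a0) mulSn; lia.
    subst q; lia.
  + move=> h; have hq : t_k k + 1 <= q.
      rewrite -ltnS -(ltn_pmul2r a0) mulSn; lia.
    have : (t_k k + 1) * a <= q * a by rewrite leq_pmul2r.
    lia.
- move=> h; case: (leqP q (t_k k)) => hq.
  + apply/orP; left; apply/hasP; exists q; first by rewrite mem_iota; lia.
    apply/andP; split; lia.
  + apply/orP; right.
    have : (t_k k + 1) * a <= q * a by rewrite leq_pmul2r //; lia.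
    lia.
Qed.

Lemma count_le_min m r : count (fun s => s <= m) (iota 0 r) = minn r m.+1.
Proof.
elim: r => [|r IH]; first by rewrite min0n.
rewrite -addn1 iotaD count_cat IH /= addn0 add0n; case: leqP => h; lia.
Qed.

Lemma cnt_block k q r : r <= a_k k ->
  count (Hb k) (iota (q * a_k k) r) = minn r (2 * q).+1.
Proof.
move=> hr; rewrite -(addn0 (q * a_k k)) iotaDl count_map -count_le_min.
apply: eq_in_count => s; rewrite mem_iota add0n => /andP [_ hs] /=.
by rewrite /Hb; have [-> ->] := dm q (leq_trans hs hr).
Qed.

Lemma cnt_mul k q : cnt (Hb k) (q * a_k k) =
  if q <= t_k k + 1 then q * q else (t_k k + 1) * (t_k k + 1) + (q - (t_k k + 1)) * a_k k.
Proof.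
have [t1 t2] := tfacts k.
elim: q => [|q IH]; first by [].
rewrite mulSn addnC /cnt iotaD count_cat -/(cnt _ _) IH cnt_block //.
have ea : a_k k = 3 * k + 2 by [].
move: (a_k k) ea => a ea.
case: (leqP q.+1 (t_k k + 1)) => h1.
  rewrite ifT; last lia.
  have -> : minn a (2 * q).+1 = (2 * q).+1 by lia.
  lia.
have -> : minn a (2 * q).+1 = a by lia.
case: (leqP q (t_k k + 1)) => h2.
  have -> : q = t_k k + 1 by lia.
  idtac.
  have -> : (t_k k + 1).+1 - (t_k k + 1) = 1 by lia.
  rewrite mul1n; lia.
have -> : q.+1 - (t_k k + 1) = (q - (t_k k + 1)).+1 by lia.
rewrite mulSn; lia.
Qed.

Lemma cnt_elem k u : Hb k u -> exists j,
  [/\ j <= t_k k + 1, j * a_k k <= u, cnt (Hb k) u + j * a_k k = j * j + u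
    & (j <= t_k k -> u <= j * a_k k + 2 * j)].
Proof.
have [t1 t2] := tfacts k.
have a0 : 0 < a_k k by rewrite /a_k; lia.
rewrite /Hb => hu.
have e := divn_eq u (a_k k); have lt := ltn_pmod u a0.
move: hu e lt; set q := u %/ a_k k; set r := u %% a_k k => hu e lt.
have hc : cnt (Hb k) u = cnt (Hb k) (q * a_k k) + r.
  rewrite {1}e /cnt iotaD count_cat -/(cnt _ _) cnt_block; last lia.
  congr (_ + _); lia.
rewrite hc cnt_mul.
have ea : a_k k = 3 * k + 2 by [].
move: (a_k k) ea a0 e lt hc => a ea a0 e lt hc.
case: (leqP q (t_k k)) => h.
  exists q; rewrite ifT; last lia.
  split; lia.
exists (t_k k + 1).
have hm : (if q <= t_k k + 1 then q * q
    else (t_k k + 1) * (t_k k + 1) + (q - (t_k k + 1)) * a) =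
    (t_k k + 1) * (t_k k + 1) + (q - (t_k k + 1)) * a.
  case: ifP => h'; last by [].
  have -> : q = t_k k + 1 by lia.
  by rewrite subnn mul0n addn0.
rewrite hm.
have [d hd] : exists d, q = d + (t_k k + 1) by exists (q - (t_k k + 1)); lia.
rewrite hd addnK; rewrite hd mulnDl in e.
split; lia.
Qed.

Lemma gen_ex k x : gen (S_k k) x <-> exists i, i * a_k k <= x <= i * a_k k + 2 * i.
Proof.
split.
- elim => [|y s _ [i hi] hs]; first by exists 0.
  exists i.+1; rewrite mulSn; move: hs; rewrite /S_k; lia.
- case=> i; elim: i x => [|i IH] x hx.
    have -> : x = 0 by lia. exact: gen0.
  move: hx; rewrite mulSn => hx.
  set s := a_k k + minn (x - (a_k k + i * a_k k)) 2.
  have -> : x = (x - s) + s by rewrite subnK //; lia.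
  apply: genS; first by apply: IH; lia.
  rewrite /S_k /s; lia.
Qed.

Lemma Hb_ex k x : Hb k x <-> exists i, i * a_k k <= x <= i * a_k k + 2 * i.
Proof.
have [t1 t2] := tfacts k.
have a0 : 0 < a_k k by rewrite /a_k; lia.
split.
- rewrite /Hb => h; exists (x %/ a_k k).
  have e := divn_eq x (a_k k); lia.
- case=> i /andP [h1 h2]; rewrite -H7_Hb /H7; apply/orP.
  case: (leqP i (t_k k)) => hi.
    left; apply/hasP; exists i; first by rewrite mem_iota; lia.
    by rewrite /I_ik /itv h1 h2.
  right; rewrite /itvinf; apply: leq_trans h1; rewrite leq_pmul2r //; lia.
Qed.

Lemma res_elem k u : Hb k u -> exists j, [/\ j <= t_k k + 1, j * j <= cnt (Hb k) u,
  (j <= t_k k -> cnt (Hb k) u <= j * j + 2 * j) &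
  u %% 3 = (cnt (Hb k) u + (j %% 3 == 1)) %% 3].
Proof.
case/cnt_elem => j [h1 h2 h3 h4]; exists j; split => //; try lia.
move: h3; rewrite /a_k.
have e := divn_eq j 3; have : j %% 3 < 3 by rewrite ltn_mod.
move: (j %/ 3) (j %% 3) e => s [|[|[|e]]] ej _ //; rewrite ej /=; lia.
Qed.

Lemma tri c1 c2 j1 j2 x1 x2 m p q t :
  j1 <= t + 1 -> j2 <= t + 1 -> j1 * j1 <= c1 -> j2 * j2 <= c2 ->
  (j1 <= t -> c1 <= j1 * j1 + 2 * j1) -> (j2 <= t -> c2 <= j2 * j2 + 2 * j2) ->
  x1 %% 3 = (c1 + (j1 %% 3 == 1)) %% 3 -> x2 %% 3 = (c2 + (j2 %% 3 == 1)) %% 3 ->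
  c1 = 3 * m + p -> c2 = 3 * m + q -> 1 <= p <= 3 -> 1 <= q <= 3 -> p != q ->
  x1 %% 3 != x2 %% 3.
Proof.
have sq : forall u v, u <= v -> u * u <= v * v by move=> u v h; exact: leq_mul.
wlog: c1 c2 j1 j2 x1 x2 p q / (j1 %% 3 == 1) || (j2 %% 3 != 1).
  move=> W; case: (boolP ((j1 %% 3 == 1) || (j2 %% 3 != 1))) => hc; first exact: W.
  move=> ? ? ? ? ? ? ? ? ? ? ? ? ?; rewrite eq_sym; apply: (W c2 c1 j2 j1 x2 x1 q p) => //.
    move: hc; case: (j1 %% 3 == 1); case: (j2 %% 3 == 1) => //.
  by rewrite eq_sym.
case: (boolP (j1 %% 3 == 1)) => hj1 /= hj2; last first.
  rewrite (negbTE hj2) /=; lia.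
case: (boolP (j2 %% 3 == 1)) => hj2'.
  lia.
move=> ? ? ? ? ? ? e1 e2 ? ? ? ? ?.
have e := divn_eq j1 3; move: e; rewrite (eqP hj1); move: (j1 %/ 3) => s ej.
case: (ltngtP j2 j1) => hlt.
- have := sq j2.+1 j1 hlt; rewrite ej in hlt *; lia.
- have := sq j1.+1 j2 hlt; rewrite ej in hlt *; lia.
- by rewrite hlt hj1 in hj2'.
Qed.

Lemma nthE k j x : nth_elem (H7 k) j x = Hb k x && (cnt (Hb k) x == j).
Proof. by rewrite /nth_elem H7_Hb (eq_count (H7_Hb k)). Qed.

Lemma Hb_tail k x : (t_k k + 1) * a_k k <= x -> Hb k x.
Proof. by move=> h; rewrite -H7_Hb /H7 /itvinf h orbT. Qed.

Lemma gen_add P x y : gen P x -> gen P y -> gen P (x + y).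
Proof.
move=> hx; elim => [|z s _ IH hs]; first by rewrite addn0.
rewrite addnA; exact: genS.
Qed.

Lemma gen_ext (P Q : nat -> Prop) x : (forall y, P y -> Q y) -> gen P x -> gen Q x.
Proof. move=> h; elim => [|z s _ IH hs]; [exact: gen0 | exact: genS (h _ hs)]. Qed.

Lemma small_elem k e : 0 < k -> e <= 2 -> Hb k (a_k k + e) /\ cnt (Hb k) (a_k k + e) = e.+1.
Proof.
move=> hk he; have [t1 t2] := tfacts k.
have ha : e < a_k k by rewrite /a_k; lia.
have [d m] := dm 1 ha; rewrite mul1n in d m.
split; first by rewrite /Hb d m; lia.
have c1 : cnt (Hb k) (a_k k) = 1 by have := cnt_mul k 1; rewrite mul1n ifT //; lia.
have c2 := @cnt_block k 1 e (ltnW ha); rewrite mul1n in c2.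
rewrite /cnt iotaD count_cat add0n -/(cnt _ _) c1 c2; lia.
Qed.

Lemma resdiff k m p q x y : Hb k x -> Hb k y -> cnt (Hb k) x = 3 * m + p ->
  cnt (Hb k) y = 3 * m + q -> 1 <= p <= 3 -> 1 <= q <= 3 -> p != q -> x %% 3 != y %% 3.
Proof.
move=> /res_elem [j1 [a1 b1 c1 d1]] /res_elem [j2 [a2 b2 c2 d2]] e1 e2 hp hq pq.
exact: (tri a1 a2 b1 b2 c1 c2 d1 d2 e1 e2 hp hq pq).
Qed.

Theorem lemma4p7 (k : nat) (hk : 0 < k) :
  (forall x, gen (S_k k) x <-> H7 k x) /\
  ((forall i, i <= t_k k -> setlt (I_ik i k) (I_ik i.+1 k)) /\
   setlt (I_ik (t_k k) k) (itvinf ((t_k k + 1) * a_k k))) /\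
  perm_numerical_semigroup 3 (H7 k).
Proof.
have [t1 t2] := tfacts k.
have G1 : forall x, gen (S_k k) x <-> H7 k x.
  by move=> x; rewrite H7_Hb Hb_ex gen_ex.
split; first exact: G1.
split.
  split.
    move=> i hi x y; rewrite /I_ik /itv mulSn /a_k => /andP [_ h1] /andP [h2 _]; lia.
  move=> x y; rewrite /I_ik /itv /itvinf mulnDl mul1n /a_k => /andP [_ h1] h2; lia.
have Hex : forall j, exists x, Hb k x /\ cnt (Hb k) x = j.
  move=> j; apply: (@cnt_exists _ ((t_k k + 1) * a_k k)) => x; exact: Hb_tail.
split; [split; [|split]|split].
- by rewrite H7_Hb /Hb mod0n.
- move=> x y /G1 hx /G1 hy; apply/G1; exact: gen_add.
- exists (iota 0 ((t_k k + 1) * a_k k)) => x hx; rewrite mem_iota add0n /=.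
  by rewrite ltnNge; apply: contra hx => h; rewrite /H7 /itvinf h orbT.
- move=> x; split.
  + move/G1; apply: gen_ext => y hy.
    have [e [he hy']] : exists e, e <= 2 /\ y = a_k k + e by move: hy; rewrite /S_k; case=> [->|[->|->]]; [exists 0|exists 1|exists 2]; rewrite ?addn0.
    have [hb hc] := small_elem hk he.
    exists e.+1; first lia.
    by rewrite nthE hy' hb hc eqxx.
  + move=> h; apply/G1; move: h; apply: gen_ext => y [i hi].
    rewrite nthE => /andP [hb /eqP hc].
    have he : i.-1 <= 2 by lia.
    have [hb' hc'] := small_elem hk he.
    have -> : y = a_k k + i.-1 by apply: cnt_inj hb hb' _; rewrite hc hc'; lia.
    rewrite /S_k; move: he; case: (i.-1) => [|[|[|]]] //= _; lia.
- move=> m r hr.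
  have [x1 [b1 c1]] := Hex (3 * m + 1).
  have [x2 [b2 c2]] := Hex (3 * m + 2).
  have [x3 [b3 c3]] := Hex (3 * m + 3).
  have d12 := resdiff b1 b2 c1 c2 isT isT isT.
  have d13 := resdiff b1 b3 c1 c3 isT isT isT.
  have d23 := resdiff b2 b3 c2 c3 isT isT isT.
  have lt1 : x1 %% 3 < 3 by rewrite ltn_mod.
  have lt2 : x2 %% 3 < 3 by rewrite ltn_mod.
  have lt3 : x3 %% 3 < 3 by rewrite ltn_mod.
  have [p [hp [x [hx [cx hxr]]]]] : exists p, 1 <= p <= 3 /\ exists x, Hb k x /\ cnt (Hb k) x = 3 * m + p /\ x %% 3 = r.
    have : r = x1 %% 3 \/ r = x2 %% 3 \/ r = x3 %% 3 by lia.
    case=> [->|[->|->]]; [exists 1; split=> //; exists x1 | exists 2; split=> //; exists x2 | exists 3; split=> //; exists x3]; done.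
  exists p; split.
    split=> //; exists x => //; rewrite nthE hx; apply/eqP; lia.
  move=> p' [hp' [y]]; rewrite nthE => /andP [hy /eqP cy] hyr.
  apply/eqP; apply/negP => /negP np.
  have := resdiff hx hy cx _ hp hp' np.
  by rewrite mulnC in cy; move=> /(_ cy); rewrite hyr hxr eqxx.
Qed.
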